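(* Let $\mathcal{P}$ be a partition of $\{1,\dots,n\}$. A subspace $\mathcal{U}$ of $\mathbb{R}^n$ is $\mathcal{P}$-realizable if and only if every subspace $\mathcal{U}'$ with $\mathcal{U}'\sim\mathcal{U}$ is realizable.
   Context: $G_{\mathcal{P}}$ is the group of $n\times n$ orthogonal $\mathcal{P}$-block-diagonal matrices; $\mathcal{U}\sim\mathcal{U}'$ means $\mathcal{U}'=Q\mathcal{U}$ for some $Q\in G_{\mathcal{P}}$. $\mathcal{E}_{\mathcal{P}}=\{Y\succeq0: Y_{\mathcal{I}}=I\text{ for all }\mathcal{I}\in\mathcal{P}\}$ ($Y_{\mathcal{I}}$ the principal submatrix indexed by $\mathcal{I}$); $\mathcal{U}$ is $\mathcal{P}$-realizable if some $Y\in\mathcal{E}_{\mathcal{P}}$ has nullspace containing $\mathcal{U}$. $\mathcal{U}$ is realizable if some positive semidefinite matrix with unit diagonal has nullspace containing $\mathcal{U}$. *)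

(* Defs.v *)
(* Subspaces of R^n are represented (mathcomp mxalgebra style)
   by matrices whose ROW SPACE is the subspace; vectors are row vectors 'rV_n. *)
From mathcomp Require Import all_boot all_order all_algebra.
From mathcomp Require Import reals.
Set Implicit Arguments. Unset Strict Implicit. Unset Printing Implicit Defensive.
Import Order.TTheory GRing.Theory Num.Theory.
Local Open Scope ring_scope.

Section Defs.
Variables (R : realType) (n : nat).

Definition psd (Y : 'M[R]_n) : Prop :=
  Y^T = Y /\ forall x : 'rV[R]_n, 0 <= (x *m Y *m x^T) 0 0.

Definition in_EP (P : {set {set 'I_n}}) (Y : 'M[R]_n) : Prop :=
  psd Y /\ forall I, I \in P -> forall i j, i \in I -> j \in I ->
    Y i j = (i == j)%:R.

Definition null_contains (Y : 'M[R]_n) m (U : 'M[R]_(m, n)) : Prop :=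
  Y *m U^T = 0.

Definition P_realizable (P : {set {set 'I_n}}) m (U : 'M[R]_(m, n)) : Prop :=
  exists Y, in_EP P Y /\ null_contains Y U.

Definition realizable m (U : 'M[R]_(m, n)) : Prop :=
  exists Y : 'M[R]_n, psd Y /\ (forall i, Y i i = 1) /\ null_contains Y U.

Definition in_GP (P : {set {set 'I_n}}) (Q : 'M[R]_n) : Prop :=
  Q *m Q^T = 1%:M /\
  forall i j, Q i j != 0 -> exists2 I, I \in P & (i \in I) && (j \in I).

(* U ~ U' : U' = Q U for some Q in G_P.  With row-vector representation the
   subspace Q U = { Q u | u in U } is the row space of U *m Q^T. *)
Definition P_equiv (P : {set {set 'I_n}}) m (U : 'M[R]_(m, n))
    m' (U' : 'M[R]_(m', n)) : Prop :=
  exists2 Q, in_GP P Q & (U' == U *m Q^T)%MS.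

End Defs.

(* Main.v *)
Require Import Defs.
From mathcomp Require Import all_boot all_order all_algebra.
From mathcomp Require Import reals.
From mathcomp Require Import classical_sets boolp reals topology normedtype matrix_normedtype derive.
From mathcomp Require Import ring lra.
Set Implicit Arguments. Unset Strict Implicit. Unset Printing Implicit Defensive.
Import Order.TTheory GRing.Theory Num.Theory numFieldTopology.Exports numFieldNormedType.Exports.

Module EigM.
Local Open Scope classical_set_scope.
Local Open Scope ring_scope.

Section Cont.
Variables (R : realType) (N : nat).
Local Notation T := 'rV[R]_N.
Lemma cont_coord j : continuous (fun v : T => v 0 j).
Proof. exact: coord_continuous. Qed.
Lemma cont_cst (c : R) : continuous (fun _ : T => c).
Proof. exact: cst_continuous. Qed.
Lemma cont_add (f g : T -> R) : continuous f -> continuous g -> continuous (fun v => f v + g v).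
Proof. move=> hf hg x; exact: (continuousD (hf x) (hg x)). Qed.
Lemma cont_mul (f g : T -> R) : continuous f -> continuous g -> continuous (fun v => f v * g v).
Proof. move=> hf hg x; exact: (continuousM (hf x) (hg x)). Qed.
Lemma cont_opp (f : T -> R) : continuous f -> continuous (fun v => - f v).
Proof. move=> hf x; exact: (continuousN (hf x)). Qed.
Lemma cont_sum (I : finType) (F : I -> T -> R) : (forall i, continuous (F i)) ->
  continuous (fun v => \sum_i F i v).
Proof.
move=> hF.
suff H : forall s, continuous (fun v => \sum_(i <- s) F i v) by exact: H.
elim=> [|a s IH]; first by under eq_fun do rewrite big_nil; exact: cont_cst.
under eq_fun do rewrite big_cons; exact: cont_add.
Qed.

Lemma min_exists (A : set T) (f : T -> R) : A !=set0 ->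
  (exists2 B : R, 0 <= B & forall v, A v -> forall j, `|v 0 j| <= B) -> closed A ->
  continuous f -> exists c, A c /\ forall v, A v -> f c <= f v.
Proof.
move=> A0 [B B0 hB] cA cf.
have cpA : compact A.
  apply: bounded_closed_compact cA.
  exists B; split; first exact: num_real.
  move=> M hM v Av; rewrite /Num.norm /= mx_normrE.
  apply/bigmax_leP; split=> [|[i j] _ /=]; first by apply: ltW; apply: le_lt_trans hM.
  apply: ltW; apply: le_lt_trans hM; by rewrite (ord1 i); exact: hB.
have [c cA' hc] := compact_EVT_min A0 cpA (continuous_subspaceT cf).
exists c; split; first by rewrite inE in cA'.
by move=> v Av; apply: hc; rewrite inE.
Qed.

Lemma closed_ge0 (K : Type) (g : K -> T -> R) : (forall k, continuous (g k)) ->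
  closed [set v | forall k, 0 <= g k v].
Proof.
move=> hg.
have -> : [set v | forall k, 0 <= g k v] = \bigcap_(k in setT) (g k @^-1` [set x | 0 <= x]).
  by apply/seteqP; split=> v /= H k; [move=> _; exact: H | exact: H].
apply: closed_bigI => k _; move/continuous_closedP: (hg k); apply; exact: closed_ge.
Qed.

Lemma closed_eq0 (K : Type) (g : K -> T -> R) : (forall k, continuous (g k)) ->
  closed [set v | forall k, g k v = 0].
Proof.
move=> hg.
have -> : [set v | forall k, g k v = 0] = \bigcap_(k in setT) (g k @^-1` [set x | x = 0]).
  by apply/seteqP; split=> v /= H k; [move=> _; exact: H | exact: H].
apply: closed_bigI => k _; move/continuous_closedP: (hg k); apply; exact: closed_eq.
Qed.
End Cont.

Section Vec.
Variables (R : realType) (n : nat).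
Implicit Types (x y : 'rV[R]_n) (W : 'M[R]_n).

Lemma mul_self_ge0 (a : R) : 0 <= a * a.
Proof. by rewrite -expr2 sqr_ge0. Qed.

Definition bil W x y := (x *m W *m y^T) 0 0.
Definition dotv x y := (x *m y^T) 0 0.

Lemma bilE W x y : bil W x y = \sum_l (\sum_k x 0 k * W k l) * y 0 l.
Proof. rewrite /bil mxE; apply: eq_bigr => l _; by rewrite !mxE. Qed.
Lemma dotvE x y : dotv x y = \sum_j x 0 j * y 0 j.
Proof. rewrite /dotv mxE; apply: eq_bigr => l _; by rewrite !mxE. Qed.
Lemma dotv_bil x y : dotv x y = bil 1%:M x y.
Proof. by rewrite /dotv /bil mulmx1. Qed.
Lemma bilDl W x y z : bil W (x + y) z = bil W x z + bil W y z.
Proof. by rewrite /bil !mulmxDl mxE. Qed.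
Lemma bilDr W x y z : bil W z (x + y) = bil W z x + bil W z y.
Proof. by rewrite /bil linearD /= mulmxDr mxE. Qed.
Lemma bilZl W a x z : bil W (a *: x) z = a * bil W x z.
Proof. by rewrite /bil -!scalemxAl mxE. Qed.
Lemma bilZr W a x z : bil W z (a *: x) = a * bil W z x.
Proof. by rewrite /bil linearZ /= -scalemxAr mxE. Qed.
Lemma bil_sym W x y : W^T = W -> bil W x y = bil W y x.
Proof.
move=> hW; rewrite /bil.
have -> : (x *m W *m y^T) 0 0 = (x *m W *m y^T)^T 0 0 by rewrite [RHS]mxE.
by rewrite !trmx_mul trmxK hW mulmxA.
Qed.
Lemma dotv_sym x y : dotv x y = dotv y x.
Proof. by rewrite !dotv_bil bil_sym // trmx1. Qed.
Lemma dotv_ge0 x : 0 <= dotv x x.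
Proof. rewrite dotvE; apply: sumr_ge0 => j _; exact: mul_self_ge0. Qed.
Lemma dotv_eq0 x : dotv x x = 0 -> x = 0.
Proof.
rewrite dotvE => /eqP; rewrite psumr_eq0 => [H|j _]; last exact: mul_self_ge0.
apply/rowP => j; rewrite mxE; have := allP H j (mem_index_enum _).
by rewrite mulf_eq0 orbb => /eqP.
Qed.
Lemma coord_sq_le x j : x 0 j * x 0 j <= dotv x x.
Proof.
rewrite dotvE (bigD1 j) //= lerDl; apply: sumr_ge0 => k _; exact: mul_self_ge0.
Qed.

Lemma quad_le_lemma (a b : R) : (forall t, 0 <= 2 * t * a + t ^+ 2 * b) -> a = 0.
Proof.
move=> H; apply/eqP; apply/negPn/negP => a0.
have := H (- a / (`|b| + 1)).
have hb : 0 < `|b| + 1 by rewrite ltr_pwDr // normr_ge0.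
set d := `|b| + 1 in hb *.
have e : 2 * (- a / d) * a + (- a / d) ^+ 2 * b = a ^+ 2 / d ^+ 2 * (b - 2 * d).
  by field; rewrite gt_eqF.
have a2 : 0 < a ^+ 2 by rewrite lt0r sqr_ge0 sqrf_eq0 a0.
rewrite e; apply/negP; rewrite -ltNge pmulr_rlt0; last first.
  by rewrite divr_gt0 // exprn_gt0.
rewrite /d; have := ler_norm b; have := normr_ge0 b; lra.
Qed.
End Vec.

Section Eig.
Variables (R : realType) (n : nat).

Lemma bil0l (W : 'M[R]_n) x : bil W 0 x = 0.
Proof. by rewrite /bil !mul0mx mxE. Qed.

Lemma normalize (y : 'rV[R]_n) : y != 0 -> exists2 a : R, 0 < a & a * (a * dotv y y) = 1.
Proof.
move=> y0; have Np : 0 < dotv y y.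
  rewrite lt_def dotv_ge0 andbT; apply: contraNneq y0 => /dotv_eq0 ->; by [].
exists (Num.sqrt (dotv y y))^-1; first by rewrite invr_gt0 sqrtr_gt0.
rewrite mulrA -expr2 exprVn sqr_sqrtr ?ltW // mulVf // gt_eqF //.
Qed.

Lemma eig_exists (W : 'M[R]_n) (S : {set 'I_n}) p (B : 'M[R]_(p, n)) :
  W^T = W -> (forall l j, l \in S -> W l j != 0 -> j \in S) ->
  (forall r, exists mu, row r B *m W = mu *: row r B) ->
  (\rank B < #|S|)%N ->
  exists x : 'rV[R]_n, [/\ dotv x x = 1, (forall j, j \notin S -> x 0 j = 0),
     x *m B^T = 0 & exists lam, x *m W = lam *: x].
Proof.
move=> hW hS hB hrk.
pose V (x : 'rV[R]_n) := (forall j, j \notin S -> x 0 j = 0) /\ x *m B^T = 0.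
have VD x y : V x -> V y -> V (x + y).
  move=> [x1 x2] [y1 y2]; split; last by rewrite mulmxDl x2 y2 addr0.
  by move=> j jS; rewrite mxE x1 // y1 // addr0.
have VZ a x : V x -> V (a *: x).
  move=> [x1 x2]; split; last by rewrite -scalemxAl x2 scaler0.
  by move=> j jS; rewrite mxE x1 // mulr0.
have [y Vy y0] : exists2 y, V y & y != 0.
  pose F : 'M[R]_(#|S|, n) := \matrix_(r, j) (enum_val r == j)%:R.
  pose M := F *m B^T.
  have rM : (\rank M < #|S|)%N.
    by apply: leq_ltn_trans (mxrankM_maxr _ _) _; rewrite mxrank_tr.
  have K0 : kermx M != 0 by rewrite -mxrank_eq0 mxrank_ker subn_eq0 -ltnNge.
  have [r hr] : exists r, row r (kermx M) != 0.
    apply/existsP; apply: contraR K0 => /existsPn H; apply/eqP/row_matrixP => r.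
    by rewrite row0; apply/eqP; move: (H r); rewrite negbK.
  set z := row r (kermx M) in hr.
  have zM : z *m M = 0 by rewrite /z -row_mul mulmx_ker row0.
  have [s hs] : exists s, z 0 s != 0.
    apply/existsP; apply: contraR hr => /existsPn H; apply/eqP/rowP => j.
    by rewrite [RHS]mxE; apply/eqP; move: (H j); rewrite negbK.
  exists (z *m F); first split.
  - move=> j jS; rewrite mxE big1 // => r' _; rewrite /F !mxE.
    set v := enum_val _; have vS : v \in S by exact: enum_valP.
    case E: (_ == _); last by rewrite mulr0.
    by move/eqP: E => e; rewrite e (negbTE jS) in vS.
  - by rewrite -mulmxA.
  - have Fe : forall r' j, F r' j = (enum_val r' == j)%:R by move=> *; rewrite /F mxE.
    apply: contraNneq hs => e; apply/eqP.
    have := congr1 (fun v : 'rV_n => v 0 (enum_val s)) e; rewrite /= [LHS]mxE [RHS]mxE.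
    rewrite (bigD1 s) //= Fe eqxx mulr1 big1 ?addr0 // => r' rs.
    rewrite Fe; case E: (_ == _); last by rewrite mulr0.
    by move/eqP/enum_val_inj: E => e'; rewrite e' eqxx in rs.
pose Dm := [set x : 'rV[R]_n | dotv x x = 1 /\ V x].
have Dm0 : Dm !=set0.
  have [a a0 ha] := normalize y0.
  exists (a *: y); split; last exact: VZ.
  by rewrite dotv_bil bilZl bilZr -dotv_bil.
have Dmb : exists2 Bd : R, 0 <= Bd & forall v, Dm v -> forall j, `|v 0 j| <= Bd.
  exists 1 => // v [v1 _] j; have := coord_sq_le v j; rewrite v1 => h.
  rewrite ler_norml; apply/andP; split; nra.
have Dmc : closed Dm.
  have -> : Dm = [set x | forall k : unit, dotv x x - 1 = 0] `&`
     [set x | forall j, (if j \in S then 0 else x 0 j) = 0] `&`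
     [set x | forall r, (x *m B^T) 0 r = 0].
    apply/seteqP; split=> x /=.
      move=> [x1 [x2 x3]]; split; first split.
      - by move=> _; rewrite x1 subrr.
      - by move=> j; case: ifP => // /negbT; exact: x2.
      - by move=> r; rewrite x3 mxE.
    move=> [[x1 x2] x3]; split; first by apply/eqP; rewrite -subr_eq0; apply/eqP; exact: x1 tt.
    split; first by move=> j /negbTE jS; have := x2 j; rewrite jS.
    by apply/rowP => r; rewrite x3 mxE.
  apply: closedI; first apply: closedI.
  - apply: closed_eq0 => _; under eq_fun do rewrite dotvE.
    apply: cont_add; last exact: cont_cst.
    by apply: cont_sum => j; apply: cont_mul; exact: cont_coord.
  - apply: closed_eq0 => j; case: (j \in S); [exact: cont_cst | exact: cont_coord].
  - apply: closed_eq0 => r; under eq_fun do rewrite mxE.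
    by apply: cont_sum => j; apply: cont_mul; [exact: cont_coord | exact: cont_cst].
have fc : continuous (fun x : 'rV[R]_n => - bil W x x).
  under eq_fun do rewrite bilE; apply: cont_opp; apply: cont_sum => l.
  apply: cont_mul; last exact: cont_coord.
  by apply: cont_sum => k; apply: cont_mul; [exact: cont_coord | exact: cont_cst].
have [c [[c1 Vc] cmax]] := min_exists Dm0 Dmb Dmc fc.
pose lam := bil W c c.
have hle : forall z, V z -> bil W z z <= lam * dotv z z.
  move=> z Vz; have [->|z0] := eqVneq z 0.
    by rewrite bil0l dotv_bil bil0l mulr0.
  have [a a0 ha] := normalize z0.
  have hD : Dm (a *: z).
    by split; [rewrite dotv_bil bilZl bilZr -dotv_bil | exact: VZ].
  have := cmax (a *: z) hD.
  rewrite lerN2 bilZl bilZr -/lam => h.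
  have a2 : 0 < a * a by rewrite mulr_gt0.
  have e : bil W z z = a * (a * bil W z z) * dotv z z.
    by rewrite -[LHS]mulr1 -ha; ring.
  by rewrite {1}e; apply: ler_wpM2r => //; exact: dotv_ge0.
have hcrit : forall y, V y -> lam * dotv c y = bil W c y.
  move=> y' Vy'; apply/eqP; rewrite -subr_eq0; apply/eqP.
  apply: (@quad_le_lemma _ _ (lam * dotv y' y' - bil W y' y')) => t.
  have := hle (c + t *: y') (VD _ _ Vc (VZ t y' Vy')).
  rewrite !dotv_bil !(bilDl, bilDr, bilZl, bilZr) -!dotv_bil -/lam c1.
  rewrite (bil_sym _ _ hW) (dotv_sym y' c) => h.
  lra.
have [mu hmu] : exists mu : 'rV[R]_p, forall r, row r B *m W = mu 0 r *: row r B.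
  have [f hf] := fin_all_exists hB; exists (\row_r f r) => r; by rewrite mxE hf.
have BW : B *m W = diag_mx mu *m B.
  by apply/row_matrixP => r; rewrite !row_mul hmu row_diag_mx -scalemxAl -rowE.
pose u := c *m W + (- lam) *: c.
have Vu : V u.
  split.
    move=> j jS; rewrite /u !mxE (proj1 Vc j jS) mulr0 addr0 big1 // => l _.
    have [->|cl] := eqVneq (c 0 l) 0; first by rewrite mul0r.
    have lS : l \in S by apply: contraNT cl => /(proj1 Vc) ->.
    have [->|wl] := eqVneq (W l j) 0; first by rewrite mulr0.
    by have := hS l j lS wl; rewrite (negbTE jS).
  rewrite /u mulmxDl -scalemxAl (proj2 Vc) scaler0 addr0 -mulmxA.
  have -> : W *m B^T = (B *m W)^T by rewrite trmx_mul hW.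
  by rewrite BW trmx_mul mulmxA (proj2 Vc) mul0mx.
have uu : dotv u u = 0.
  rewrite {1}/u dotv_bil bilDl bilZl -!dotv_bil.
  have -> : dotv (c *m W) u = bil W c u by [].
  by rewrite -(hcrit u Vu) mulNr subrr.
exists c; split => //; first exact: (proj1 Vc); first exact: (proj2 Vc).
exists lam; apply/eqP; rewrite -subr_eq0 -scaleNr; apply/eqP; exact: dotv_eq0.
Qed.
End Eig.

Section Spec.
Variables (R : realType) (n : nat).

Lemma mulmx_trE p q (A : 'M[R]_(p, n)) (B : 'M[R]_(q, n)) i j :
  (A *m B^T) i j = dotv (row i A) (row j B).
Proof. rewrite dotvE mxE; apply: eq_bigr => l _; by rewrite !mxE. Qed.

Lemma mulmx_trWE (A : 'M[R]_n) (W : 'M[R]_n) i j :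
  (A *m W *m A^T) i j = bil W (row i A) (row j A).
Proof. by rewrite mulmx_trE /dotv /bil row_mul. Qed.

Lemma spectral_blocks (W : 'M[R]_n) (e : rel 'I_n) :
  reflexive e -> symmetric e -> transitive e -> W^T = W ->
  (forall i j, W i j != 0 -> e i j) ->
  exists Q : 'M[R]_n, [/\ Q *m Q^T = 1%:M, (forall i j, Q i j != 0 -> e i j) &
    forall i j, i != j -> (Q *m W *m Q^T) i j = 0].
Proof.
move=> er es et hW hWe.
pose Inv k (Q : 'M[R]_n) :=
  (forall i : 'I_n, (i < k)%N -> [/\ dotv (row i Q) (row i Q) = 1,
       (forall j, Q i j != 0 -> e i j) &
       exists lam, row i Q *m W = lam *: row i Q]) /\
  (forall i j : 'I_n, (i < k)%N -> (j < k)%N -> i != j -> dotv (row i Q) (row j Q) = 0).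
have step : forall k, (k <= n)%N -> exists Q, Inv k Q.
  elim=> [_|k IH hk]; first by exists 0; split.
  have [Q [Q1 Q2]] := IH (ltnW hk).
  pose i0 : 'I_n := Ordinal hk.
  pose S : {set 'I_n} := [set j | e i0 j]%SET.
  pose Sel : {set 'I_n} := [set i : 'I_n | (i < k)%N && e i0 i]%SET.
  pose B : 'M[R]_(#|Sel|, n) := \matrix_(r, j) Q (enum_val r) j.
  have rowB r : row r B = row (enum_val r) Q by apply/rowP => j; rewrite !mxE.
  have SelP (r : 'I_#|Sel|) : (enum_val r < k)%N /\ e i0 (enum_val r).
    have := @enum_valP _ (mem Sel) r; rewrite inE => /andP [].
    by [].
  have hB (r : 'I_#|Sel|) : exists mu, row r B *m W = mu *: row r B.
    by rewrite rowB; have [_ _] := Q1 _ (proj1 (SelP r)).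
  have hrk : (\rank B < #|S|)%N.
    apply: leq_ltn_trans (rank_leq_row B) _; apply: proper_card.
    apply/properP; split.
      by apply/fintype.subsetP => i; rewrite !inE => /andP [].
    by exists i0; rewrite !inE ?er // ltnn.
  have hS l j : l \in S -> W l j != 0 -> j \in S.
    by rewrite !inE => hl /hWe; exact: et.
  have [x [x1 xS xB [lam xW]]] := eig_exists hW hS hB hrk.
  pose Q' : 'M[R]_n := \matrix_(i, j) if i == i0 then x 0 j else Q i j.
  have rowQ'0 : row i0 Q' = x by apply/rowP => j; rewrite !mxE eqxx.
  have rowQ' i : i != i0 -> row i Q' = row i Q.
    by move=> /negbTE ni; apply/rowP => j; rewrite !mxE ni.
  have ltk (i : 'I_n) : (i < k.+1)%N -> i != i0 -> (i < k)%N.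
    rewrite ltnS leq_eqVlt => /orP [/eqP ik|//] ni.
    by case/negP: ni; apply/eqP; apply: ord_inj; exact: ik.
  have orth0 (j : 'I_n) : (j < k)%N -> dotv x (row j Q) = 0.
    move=> jk; have [ej|nej] := boolP (e i0 j).
      have jSel : j \in Sel by rewrite inE jk ej.
      have := congr1 (fun v : 'rV_#|Sel| => v 0 (enum_rank_in jSel j)) xB.
      rewrite /= mulmx_trE rowB enum_rankK_in // mxE => <-.
      by congr dotv; apply/rowP => l; rewrite !mxE.
    rewrite dotvE big1 // => l _; rewrite mxE.
    have [->|xl] := eqVneq (x 0 l) 0; first by rewrite mul0r.
    have [->|ql] := eqVneq (Q j l) 0; first by rewrite mulr0.
    have : l \in S by apply: contraNT xl => /xS ->.
    rewrite inE => el.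
    have [_ Qj _] := Q1 j jk; have ejl := Qj l ql.
    by case/negP: nej; apply: et el _; rewrite es.
  exists Q'; split.
    move=> i ik; have [->|ni] := eqVneq i i0.
      rewrite rowQ'0; split => //; last by exists lam.
      move=> j; rewrite !mxE eqxx => xj.
      have : j \in S by apply: contraNT xj => /xS ->.
      by rewrite inE.
    rewrite rowQ' //; have [h1 h2 h3] := Q1 i (ltk i ik ni); split => // j.
    by rewrite mxE (negbTE ni); exact: h2.
  move=> i j ik jk nij.
  have [ei | ni] := eqVneq i i0.
    have nj : j != i0 by rewrite eq_sym -ei.
    rewrite ei rowQ'0 rowQ' //; exact: orth0 (ltk j jk nj).
  have [ej | nj] := eqVneq j i0.
    rewrite ej rowQ'0 rowQ' // dotv_sym; exact: orth0 (ltk i ik ni).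
  rewrite !rowQ' //; exact: Q2 _ _ (ltk i ik ni) (ltk j jk nj) nij.
have [Q [Q1 Q2]] := step n (leqnn n).
exists Q; split.
- apply/matrixP => i j; rewrite mulmx_trE !mxE.
  have [<-|nij] := eqVneq i j; first by have [-> _ _] := Q1 i (ltn_ord i).
  by rewrite Q2.
- by move=> i j; have [_ h _] := Q1 i (ltn_ord i); exact: h.
- move=> i j nij; rewrite mulmx_trWE /bil.
  have [_ _ [lam ->]] := Q1 i (ltn_ord i).
  by rewrite -scalemxAl mxE -/(dotv _ _) Q2 ?mulr0.
Qed.
End Spec.

End EigM.
Import EigM.

From mathcomp Require Import all_boot all_order all_algebra.
From mathcomp Require Import reals.
Require Import Defs.
Import Order.TTheory GRing.Theory Num.Theory.
Local Open Scope ring_scope.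

Section S.
Variables (R : realType) (n : nat) (P : {set {set 'I_n}}).
Hypothesis hP : partition P [set: 'I_n].

Lemma coverP : cover P = [set: 'I_n].
Proof. by case/and3P: hP => /eqP. Qed.
Lemma trivP : trivIset P.
Proof. by case/and3P: hP. Qed.
Lemma mem_pb i : i \in pblock P i.
Proof. by rewrite mem_pblock coverP inE. Qed.
Lemma pb_mem i : pblock P i \in P.
Proof. by apply: pblock_mem; rewrite coverP inE. Qed.

Definition sb (i j : 'I_n) : bool := pblock P i == pblock P j.

Lemma sbE i j : sb i j = (j \in pblock P i).
Proof. by rewrite /sb eq_pblock ?trivP // coverP inE. Qed.

Lemma sb_sym i j : sb i j = sb j i.
Proof. by rewrite /sb eq_sym. Qed.

Lemma sb_trans i j k : sb i j -> sb j k -> sb i k.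
Proof. by rewrite /sb => /eqP -> . Qed.

Lemma sb_refl i : sb i i.
Proof. by rewrite /sb. Qed.

Lemma sb_of I i j : I \in P -> i \in I -> j \in I -> sb i j.
Proof.
move=> IP iI jI; rewrite /sb (def_pblock trivP IP iI) (def_pblock trivP IP jI).
by [].
Qed.

Lemma GP_sb (Q : 'M[R]_n) : in_GP P Q -> forall i j, Q i j != 0 -> sb i j.
Proof.
case=> _ H i j /H [I IP /andP [iI jI]]; exact: sb_of IP iI jI.
Qed.

Lemma EP_sb (Y : 'M[R]_n) : in_EP P Y -> forall i j, sb i j -> Y i j = (i == j)%:R.
Proof.
case=> _ H i j; rewrite sbE => hj; exact: (H _ (pb_mem i) i j (mem_pb i) hj).
Qed.

Lemma GP_orth (Q : 'M[R]_n) : in_GP P Q -> Q^T *m Q = 1%:M.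
Proof. by case=> /mulmx1C. Qed.

Lemma psd_conj (Y : 'M[R]_n) (Q : 'M[R]_n) : psd Y -> psd (Q *m Y *m Q^T).
Proof.
case=> hT hx; split.
  by rewrite !trmx_mul trmxK hT mulmxA.
move=> x; have := hx (x *m Q); by rewrite trmx_mul !mulmxA.
Qed.

Lemma diag_conj (Q Y : 'M[R]_n) : in_GP P Q -> in_EP P Y ->
  forall i, (Q *m Y *m Q^T) i i = 1.
Proof.
move=> hQ hY i.
have e1 : forall l, (Q *m Y) i l * Q i l = Q i l * Q i l.
  move=> l; have [->|nz] := eqVneq (Q i l) 0; first by rewrite !mulr0.
  congr (_ * _); rewrite mxE (bigD1 l) //= (EP_sb hY (sb_refl l)) eqxx mulr1.
  rewrite big1 ?addr0 // => k /negbTE kl.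
  have [->|nz2] := eqVneq (Q i k) 0; first by rewrite mul0r.
  have skl : sb k l.
    apply: (@sb_trans k i l); last exact: GP_sb hQ i l nz.
    by rewrite sb_sym; exact: GP_sb hQ i k nz2.
  by rewrite (EP_sb hY skl) kl mulr0.
rewrite mxE (eq_bigr (fun l => Q i l * Q i l)); last first.
  by move=> l _; rewrite [Q^T _ _]mxE e1.
transitivity ((Q *m Q^T) i i).
  by rewrite mxE; apply: eq_bigr => l _; rewrite mxE.
by rewrite (proj1 hQ) mxE eqxx.
Qed.

Lemma forward m (U : 'M[R]_(m, n)) : P_realizable P U ->
  forall m' (U' : 'M[R]_(m', n)), P_equiv P U U' -> realizable U'.
Proof.
case=> Y [hY hN] m' U' [Q hQ /andP [sub _]].
exists (Q *m Y *m Q^T); split; first exact: psd_conj (proj1 hY).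
split; first exact: diag_conj.
case/submxP: sub => D ->.
rewrite /null_contains !trmx_mul trmxK !mulmxA -(mulmxA _ Q^T) GP_orth // mulmx1.
by rewrite -(mulmxA _ Y) hN mulmx0 mul0mx.
Qed.



Lemma psd_bil (Y : 'M[R]_n) : psd Y <-> Y^T = Y /\ forall x, 0 <= bil Y x x.
Proof. by []. Qed.

Lemma bilWD (A B : 'M[R]_n) x y : bil (A + B) x y = bil A x y + bil B x y.
Proof. by rewrite /bil mulmxDr mulmxDl mxE. Qed.
Lemma bilWZ a (A : 'M[R]_n) x y : bil (a *: A) x y = a * bil A x y.
Proof. by rewrite /bil -scalemxAr -scalemxAl mxE. Qed.
Lemma bil_delta (A : 'M[R]_n) a b : bil A (delta_mx 0 a) (delta_mx 0 b) = A a b.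
Proof. by rewrite /bil -rowE trmx_delta -colE !mxE. Qed.

Section Back.
Local Open Scope classical_set_scope.
Variables (m : nat) (U : 'M[R]_(m, n)).

Definition Cset (Z : 'M[R]_n) := psd Z /\ Z *m U^T = 0.

Lemma Cset_comb (a b : R) (A B : 'M[R]_n) : 0 <= a -> 0 <= b -> Cset A -> Cset B -> Cset (a *: A + b *: B).
Proof.
move=> a0 b0 [[AT Ap] AU] [[BT Bp] BU]; split; first split.
- by rewrite linearD !linearZ /= AT BT.
- move=> x; change (0 <= bil (a *: A + b *: B) x x).
  by rewrite bilWD !bilWZ addr_ge0 // mulr_ge0 //; [exact: Ap | exact: Bp].
- by rewrite mulmxDl -!scalemxAl AU BU !scaler0 addr0.
Qed.

Definition Phi (Z : 'M[R]_n) : R :=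
  \sum_i \sum_j (if sb i j then (Z i j - (i == j)%:R) ^+ 2 else 0).

Lemma Phi_ge0 (Z : 'M[R]_n) : 0 <= Phi Z.
Proof. apply: sumr_ge0 => i _; apply: sumr_ge0 => j _; case: sb => //; exact: sqr_ge0. Qed.

Lemma Phi_term (Z : 'M[R]_n) (i : 'I_n) : (Z i i - 1) ^+ 2 <= Phi Z.
Proof.
rewrite /Phi (bigD1 i) //= (bigD1 i) //= sb_refl eqxx -addrA lerDl.
apply: addr_ge0; first by apply: sumr_ge0 => j _; case: sb => //; exact: sqr_ge0.
apply: sumr_ge0 => k _; apply: sumr_ge0 => j _; case: sb => //; exact: sqr_ge0.
Qed.

Lemma psd_diag_ge0 (Z : 'M[R]_n) : psd Z -> forall i, 0 <= Z i i.
Proof. by case=> _ h i; rewrite -bil_delta; exact: h. Qed.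

Lemma psd_offdiag (Z : 'M[R]_n) : psd Z -> forall i j, `|Z i j| <= (Z i i + Z j j) / 2.
Proof.
case=> hT h i j.
have sym : Z j i = Z i j.
  by rewrite -[in LHS]hT mxE.
have h1 : 0 <= bil Z (delta_mx 0 i + delta_mx 0 j) (delta_mx 0 i + delta_mx 0 j) := h _.
have h2 : 0 <= bil Z (delta_mx 0 i - delta_mx 0 j) (delta_mx 0 i - delta_mx 0 j) := h _.
rewrite !(bilDl, bilDr) !bil_delta sym in h1.
rewrite -scaleN1r !(bilDl, bilDr, bilZl, bilZr) !bil_delta sym in h2.
rewrite ler_norml; apply/andP; split; lra.
Qed.

Lemma cont_vm i j : continuous (fun v : 'rV[R]_(n * n) => vec_mx v i j).
Proof. under eq_fun do rewrite mxE; exact: cont_coord. Qed.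

Lemma min_Phi : exists Z, Cset Z /\ forall Z', Cset Z' -> Phi Z <= Phi Z'.
Proof.
pose A := [set v : 'rV[R]_(n * n) | Cset (vec_mx v) /\ Phi (vec_mx v) <= Phi 0].
have C0 : Cset 0.
  split; [split; [by rewrite trmx0 | by move=> x; rewrite mulmx0 mul0mx mxE] | by rewrite mul0mx].
have A0 : A !=set0 by exists 0; rewrite /A /= linear0; split.
have Ab : exists2 Bd : R, 0 <= Bd & forall v, A v -> forall k, `|v 0 k| <= Bd.
  exists (Phi 0 + 2); first by rewrite addr_ge0 // Phi_ge0.
  move=> v [[hpsd _] hPhi] k; case/mxvec_indexP: k => i j.
  have -> : v 0 (mxvec_index i j) = vec_mx v i j by rewrite mxE.
  set Z := vec_mx v in hpsd hPhi *.
  have dle l : Z l l <= Phi 0 + 2.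
    have := Phi_term Z l; have := Phi_ge0 0; have := psd_diag_ge0 hpsd l. nra.
  apply: le_trans (psd_offdiag hpsd i j) _.
  have := dle i; have := dle j; lra.
have Ac : topology_structure.closed A.
  have -> : A = [set v | forall ij : 'I_n * 'I_n, vec_mx v ij.1 ij.2 - vec_mx v ij.2 ij.1 = 0] `&`
     [set v | forall x : 'rV[R]_n, 0 <= bil (vec_mx v) x x] `&`
     [set v | forall ik : 'I_n * 'I_m, (vec_mx v *m U^T) ik.1 ik.2 = 0] `&`
     [set v | forall _ : unit, 0 <= Phi 0 - Phi (vec_mx v)].
    apply/seteqP; split=> v /=.
      move=> [[[hT hq] hU] hPh]; split; first split; first split.
      - by move=> [i j] /=; rewrite -[in X in _ - X]hT [(_^T) _ _]mxE subrr.
      - exact: hq.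
      - by move=> [i k]; rewrite hU mxE.
      - by move=> _; rewrite subr_ge0.
    move=> [[[hT hq] hU] hPh]; split; first split; first split.
    - apply/matrixP => i j; rewrite mxE; apply/eqP; rewrite eq_sym -subr_eq0; apply/eqP.
      exact: (hT (i, j)).
    - exact: hq.
    - by apply/matrixP => i k; rewrite (hU (i, k)) mxE.
    - by rewrite -subr_ge0; exact: hPh tt.
  apply: closedI; first apply: closedI; first apply: closedI.
  - apply: closed_eq0 => -[i j] /=; apply: cont_add; first exact: cont_vm.
    by apply: cont_opp; exact: cont_vm.
  - apply: closed_ge0 => x; under eq_fun do rewrite bilE.
    apply: cont_sum => l; apply: cont_mul; last exact: cont_cst.
    by apply: cont_sum => k; apply: cont_mul; [exact: cont_cst | exact: cont_vm].
  - apply: closed_eq0 => -[i k] /=; under eq_fun do rewrite mxE.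
    by apply: cont_sum => l; apply: cont_mul; [exact: cont_vm | exact: cont_cst].
  - apply: closed_ge0 => _; apply: cont_add; first exact: cont_cst.
    apply: cont_opp; rewrite /Phi; apply: cont_sum => i; apply: cont_sum => j.
    case: (sb i j); last exact: cont_cst.
    under eq_fun do rewrite expr2.
    by apply: cont_mul; apply: cont_add; (exact: cont_vm || exact: cont_cst).
have fc : continuous (fun v : 'rV[R]_(n * n) => Phi (vec_mx v)).
  rewrite /Phi; apply: cont_sum => i; apply: cont_sum => j.
  case: (sb i j); last exact: cont_cst.
  under eq_fun do rewrite expr2.
  by apply: cont_mul; apply: cont_add; (exact: cont_vm || exact: cont_cst).
have [c [[cC cP] cmin]] := min_exists A0 Ab Ac fc.
exists (vec_mx c); split => // Z' hZ'.
have [le|lt] := leP (Phi Z') (Phi 0).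
  have hA : A (mxvec Z') by rewrite /A /= mxvecK; split.
  by have := cmin _ hA; rewrite mxvecK.
by apply: le_trans cP (ltW lt).
Qed.


Definition wt (Zs : 'M[R]_n) i j := if sb i j then Zs i j - (i == j)%:R else 0.
Definition Lf (Zs Z : 'M[R]_n) := \sum_i \sum_j wt Zs i j * Z i j.

Lemma Phi_expand (Zs Z : 'M[R]_n) t : Phi ((1 - t) *: Zs + t *: Z) =
  Phi Zs + 2 * t * (Lf Zs Z - Lf Zs Zs) +
  t ^+ 2 * \sum_i \sum_j (if sb i j then (Z i j - Zs i j) ^+ 2 else 0).
Proof.
rewrite /Phi /Lf -sumrB !mulr_sumr -!big_split; apply: eq_bigr => i _.
rewrite -sumrB !mulr_sumr -!big_split; apply: eq_bigr => j _.
rewrite !mxE /wt; case: (sb i j) => /=; ring.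
Qed.

Lemma aux_pos (a b : R) : 0 <= b -> (forall t, 0 < t -> t <= 1 -> 0 <= 2 * t * a + t ^+ 2 * b) -> 0 <= a.
Proof.
move=> b0 H; rewrite leNgt; apply/negP => a0.
have ba : 0 < b - a by lra.
pose t := - a / (b - a).
have t0 : 0 < t by rewrite /t divr_gt0 // oppr_gt0.
have t1 : t <= 1 by rewrite /t ler_pdivrMr // mul1r; lra.
have ht : t * (b - a) = - a by rewrite /t divfK // gt_eqF.
have := H t t0 t1.
have -> : 2 * t * a + t ^+ 2 * b = t * (2 * a + t * b) by ring.
rewrite pmulr_rge0 // => h.
have : 0 <= (2 * a + t * b) * (b - a) by rewrite mulr_ge0 // ltW.
have -> : (2 * a + t * b) * (b - a) = 2 * a * (b - a) + b * (t * (b - a)) by ring.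
rewrite ht; nra.
Qed.

Lemma variational (Zs : 'M[R]_n) : Cset Zs -> (forall Z', Cset Z' -> Phi Zs <= Phi Z') ->
  forall Z, Cset Z -> Lf Zs Zs <= Lf Zs Z.
Proof.
move=> CZs hmin Z CZ; rewrite -subr_ge0.
apply: (aux_pos (b := \sum_i \sum_j (if sb i j then (Z i j - Zs i j) ^+ 2 else 0))).
  by apply: sumr_ge0 => i _; apply: sumr_ge0 => j _; case: sb => //; exact: sqr_ge0.
move=> t t0 t1.
have t1' : 0 <= 1 - t by rewrite subr_ge0.
have := hmin _ (Cset_comb t1' (ltW t0) CZs CZ).
by rewrite Phi_expand -addrA lerDl.
Qed.

Lemma backward : (forall m' (U' : 'M[R]_(m', n)), P_equiv P U U' -> realizable U') ->
  P_realizable P U.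
Proof.
move=> H.
have HQ : forall Q, in_GP P Q -> exists Z, Cset Z /\ forall i, (Q *m Z *m Q^T) i i = 1.
  move=> Q hQ.
  have [Y [Ypsd [Yd YN]]] : realizable (U *m Q^T).
    by apply: H; exists Q => //; apply/andP; split; exact: submx_refl.
  exists (Q^T *m Y *m Q); split; first split.
  - by have := psd_conj Q^T Ypsd; rewrite trmxK.
  - move: YN; rewrite /null_contains trmx_mul trmxK => YN.
    by rewrite -!mulmxA YN mulmx0.
  - by move=> i; rewrite !mulmxA (proj1 hQ) mul1mx -mulmxA (proj1 hQ) mulmx1 Yd.
have [Zs [CZs hmin]] := min_Phi.
have var := variational CZs hmin.
have Zsym : Zs^T = Zs := CZs.1.1.
have Zs_s i j : Zs j i = Zs i j by rewrite -{1}Zsym mxE.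
pose W : 'M[R]_n := \matrix_(i, j) wt Zs i j.
have WT : W^T = W.
  apply/matrixP => i j; rewrite !mxE /wt sb_sym eq_sym Zs_s //.
have We : forall i j, W i j != 0 -> sb i j.
  by move=> i j; rewrite mxE /wt; case: (sb i j) => //; rewrite eqxx.
have [Q [QQ Qe Qd]] := spectral_blocks (e := sb) sb_refl sb_sym
  (fun y x z => @sb_trans x y z) WT We.
have hQ : in_GP P Q.
  split => // i j /Qe; rewrite sbE => hj; exists (pblock P i); first exact: pb_mem.
  by rewrite mem_pb hj.
have [ZQ [CZQ ZQd]] := HQ Q hQ.
have ZQ_s i j : ZQ j i = ZQ i j by rewrite -{1}(CZQ.1.1) mxE.
pose D := Q *m W *m Q^T.
have QtQ : Q^T *m Q = 1%:M := mulmx1C QQ.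
have WD : W = Q^T *m D *m Q by rewrite /D !mulmxA QtQ mul1mx -mulmxA QtQ mulmx1.
have trW : \sum_i W i i = \sum_i D i i.
  have -> : \sum_i W i i = \tr W by [].
  by rewrite WD mxtrace_mulC mulmxA QQ mul1mx.
have LZQ : Lf Zs ZQ = \sum_i W i i.
  have -> : Lf Zs ZQ = \tr (W *m ZQ).
    rewrite /Lf /mxtrace; apply: eq_bigr => i _; rewrite mxE; apply: eq_bigr => j _.
    by rewrite mxE ZQ_s.
  rewrite trW {1}WD -mulmxA -mulmxA mxtrace_mulC -mulmxA /mxtrace.
  apply: eq_bigr => i _.
  rewrite mxE (bigD1 i) //= big1 ?addr0; first by rewrite ZQd mulr1.
  by move=> j /negbTE ji; rewrite Qd ?mul0r // eq_sym ji.
have LZs : Lf Zs Zs = \sum_i \sum_j W i j ^+ 2 + \sum_i W i i.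
  rewrite /Lf -big_split; apply: eq_bigr => i _ /=.
  rewrite (bigD1 i) //= [in RHS](bigD1 i) //=.
  rewrite (eq_bigr (fun j => W i j ^+ 2)); last first.
    by move=> j /negbTE ji; rewrite mxE /wt eq_sym ji; case: (sb i j) => /=; ring.
  have -> : wt Zs i i * Zs i i = W i i ^+ 2 + W i i by rewrite !mxE /wt sb_refl eqxx /=; ring.
  ring.
have := var _ CZQ; rewrite LZs LZQ gerDr => hle.
have W0 : forall i j, W i j = 0.
  have hs : \sum_i \sum_j W i j ^+ 2 = 0.
    apply/eqP; rewrite eq_le hle /=.
    by apply: sumr_ge0 => i _; apply: sumr_ge0 => j _; exact: sqr_ge0.
  move=> i j; move/eqP: hs; rewrite psumr_eq0 => [/allP /(_ i (mem_index_enum _))|k _]; last first.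
    by apply: sumr_ge0 => l _; exact: sqr_ge0.
  rewrite psumr_eq0 => [/allP /(_ j (mem_index_enum _))|k _]; last exact: sqr_ge0.
  by rewrite sqrf_eq0 => /eqP.
exists Zs; split; last exact: CZs.2.
split; first exact: CZs.1.
move=> I IP i j iI jI; have sij := sb_of IP iI jI.
have := W0 i j; rewrite mxE /wt sij => /eqP; rewrite subr_eq0 => /eqP.
by [].
Qed.

End Back.

End S.

Theorem theorem5p7 (R : realType) (n : nat) (P : {set {set 'I_n}})
  (hP : partition P [set: 'I_n]) (m : nat) (U : 'M[R]_(m, n)) :
  P_realizable P U <->
  (forall (m' : nat) (U' : 'M[R]_(m', n)), P_equiv P U U' -> realizable U').
Proof. split; [move=> H; exact: (forward hP H) | move=> H; exact: (backward hP H)]. Qed.
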